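(* There is an absolute constant $c>0$ such that for every odd $n$, every mapping $\phi\colon\{0,1\}^n\to\{0,1\}^n$ from ${\sf XOR}$ to ${\sf Majority}$ satisfies ${\sf avgStretch}(\phi)\ge c\sqrt{n}$. On the other hand, there is an absolute constant $C$ such that for every odd $n$ there exists a $C$-Lipschitz mapping $\psi\colon\{0,1\}^n\to\{0,1\}^n$ from ${\sf Majority}$ to ${\sf XOR}$.
   Context: ${\sf XOR}(x)=\sum_i x_i \bmod 2$; ${\sf Majority}(x)=1$ iff $\sum_i x_i>n/2$. A mapping from $f$ to $g$ is a bijection $\psi$ of $\{0,1\}^n$ with $f(z)=g(\psi(z))$ for all $z$. ${\sf avgStretch}(\phi)=\mathbb{E}_{x,i}[{\sf dist}(\phi(x),\phi(x+e_i))]$ with $x$ uniform in $\{0,1\}^n$, $i$ uniform in $[n]$, $e_i$ the $i$-th unit vector, addition mod 2, ${\sf dist}$ Hamming distance. $C$-Lipschitz: ${\sf dist}(\psi(x),\psi(y))\le C\,{\sf dist}(x,y)$ for all $x,y$. *)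

(* Defs.v *)
From mathcomp Require Import all_boot all_order all_algebra all_fingroup all_field.
Set Implicit Arguments. Unset Strict Implicit. Unset Printing Implicit Defensive.
Import Order.TTheory GRing.Theory Num.Theory.
Local Open Scope ring_scope.

Definition cube (n : nat) := {ffun 'I_n -> bool}.

Definition XOR n (x : cube n) : bool := odd (\sum_(i < n) (x i : nat))%N.

Definition Majority n (x : cube n) : bool := (n < 2 * \sum_(i < n) (x i : nat))%N.

Definition dist n (x y : cube n) : nat := #|[set i : 'I_n | x i != y i]|%N.

Definition flip n (x : cube n) (i : 'I_n) : cube n :=
  [ffun j => if j == i then ~~ x j else x j].

Definition mapping_from n (f g : cube n -> bool) (phi : {perm cube n}) : Prop :=
  forall z, f z = g (phi z).

Definition avgStretch n (phi : cube n -> cube n) : algC :=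
  (\sum_(x : cube n) \sum_(i < n) (dist (phi x) (phi (flip x i)))%:R)
    / ((2 ^ n)%N%:R * n%:R).

Definition Lipschitz n (C : algC) (psi : cube n -> cube n) : Prop :=
  forall x y, ((dist (psi x) (psi y))%:R : algC) <= C * (dist x y)%:R.

(* Main.v *)
Require Import Defs.
From mathcomp Require Import all_boot all_order all_algebra all_fingroup all_field.
From mathcomp Require Import zify.
Import Order.TTheory GRing.Theory Num.Theory.
Set Implicit Arguments. Unset Strict Implicit.


Lemma distE n (x y : cube n) : dist x y = (\sum_(i < n) (x i != y i : nat))%N.
Proof.
rewrite /dist -sum1_card big_mkcond /=; apply: eq_bigr => i _.
by rewrite inE; case: (x i != y i).
Qed.

Definition w n (x : cube n) : nat := (\sum_(i < n) (x i : nat))%N.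
Definition G n k : nat := (2 * k - n + (n - 2 * k))%N.
Definition ad (a b : nat) : nat := (a - b + (b - a))%N.

Lemma w_le n (y z : cube n) : (w y <= w z + dist y z)%N.
Proof.
rewrite distE /w -big_split /=; apply: leq_sum => i _.
by case: (y i); case: (z i).
Qed.

Lemma distC n (y z : cube n) : dist y z = dist z y.
Proof. by rewrite !distE; apply: eq_bigr => i _; rewrite eq_sym. Qed.

Lemma majE n (y : cube n) : Majority y = (n < 2 * w y)%N.
Proof. by []. Qed.

Lemma maj_dist n (y z : cube n) :
  Majority y != Majority z -> (G n (w y) <= 2 * dist y z)%N.
Proof.
rewrite !majE /G => H.
have h1 := w_le y z; have h2 := w_le z y; rewrite distC in h2.
move: H; case E1: (n < 2 * w y)%N; case E2: (n < 2 * w z)%N => //= _; lia.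
Qed.

Lemma xor_flip n (x : cube n) i : XOR (flip x i) = ~~ XOR x.
Proof.
rewrite /XOR (bigD1 i) //= [X in _ = ~~ odd X](bigD1 i) //= ffunE eqxx !oddD.
rewrite (eq_bigr (fun j => (x j : nat))); last first.
  by move=> j /negbTE ne; rewrite ffunE ne.
by rewrite !oddb; case: (x i); rewrite /= ?addTb ?addFb ?negbK.
Qed.

Lemma sumD n (phi : {perm cube n}) :
  mapping_from (@XOR n) (@Majority n) phi ->
  (n * \sum_(y : cube n) G n (w y) <=
   2 * \sum_(x : cube n) \sum_(i < n) dist (phi x) (phi (flip x i)))%N.
Proof.
move=> H.
rewrite (reindex_inj (@perm_inj _ phi)) /= !big_distrr /=.
apply: leq_sum => x _.
rewrite -[X in (X * _)%N](card_ord n) -sum_nat_const big_distrr /=.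
apply: leq_sum => i _; apply: maj_dist.
by rewrite -!H xor_flip; case: (XOR x).
Qed.

Lemma wset n (B : {set 'I_n}) : w [ffun i => i \in B] = #|B|.
Proof.
rewrite /w -sum1_card [RHS]big_mkcond /=.
by apply: eq_bigr => i _; rewrite ffunE; case: (i \in B).
Qed.

Lemma sumG n : (\sum_(y : cube n) G n (w y) = \sum_(k < n.+1) 'C(n, k) * G n k)%N.
Proof.
rewrite (reindex (fun B : {set 'I_n} => [ffun i => i \in B])) /=; last first.
  exists (fun y : cube n => [set i | y i]) => [B _ | y _].
    by apply/setP => i; rewrite inE ffunE.
  by apply/ffunP => i; rewrite ffunE inE.
under eq_bigr => B _ do rewrite wset.
rewrite (partition_big (fun B : {set 'I_n} => (inord #|B| : 'I_n.+1)) predT) //=.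
apply: eq_bigr => k _.
rewrite (eq_bigl (fun B => B \in [set B : {set 'I_n} | #|B| == k])); last first.
  move=> B; rewrite inE; have Bn : (#|B| < n.+1)%N.
    by rewrite ltnS; apply: leq_trans (max_card _) _; rewrite card_ord.
  by rewrite -val_eqE /= inordK.
rewrite (eq_bigr (fun _ => G n k)); last by move=> B; rewrite inE => /eqP ->.
by rewrite sum_nat_const card_draws card_ord.
Qed.

Lemma tele (f : nat -> nat) a b : (a <= b)%N ->
  (ad (f a) (f b) <= \sum_(a <= k < b) ad (f k) (f k.+1))%N.
Proof.
elim: b => [|b IH].
  by rewrite leqn0 => /eqP ->; rewrite /ad subnn.
rewrite leq_eqVlt => /orP [/eqP ->| lt]; first by rewrite /ad subnn.
rewrite big_nat_recr //=; have := IH lt; rewrite /ad; lia.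
Qed.

Lemma bound n j : (j <= n.+1)%N ->
  (2 * (j * 'C(n, j)) <= \sum_(k < n.+1) 'C(n, k) * G n k)%N.
Proof.
move=> hj.
set g := fun k => (k * 'C(n, k))%N.
rewrite -(big_mkord xpredT (fun k => 'C(n, k) * G n k)%N).
rewrite (eq_big_nat _ _ (F2 := fun k => ad (g k) (g k.+1))); last first.
  move=> k /andP [_ lt]; rewrite /g mul_bin_left /ad /G.
  rewrite mulnC -!mulnBl -mulnDl; congr (_ * _)%N; lia.
rewrite (big_cat_nat (leq0n j) hj) /=.
have t1 := tele g (leq0n j); have t2 := tele g hj.
have g0 : g 0%N = 0%N by [].
have gn : g n.+1 = 0%N by rewrite /g bin_small ?muln0.
move: t1 t2; rewrite /ad g0 gn /g; lia.
Qed.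

Lemma central m : (16 ^ m <= (4 * m + 1) * 'C(2 * m, m) ^ 2)%N.
Proof.
elim: m => [|m IH]; first by [].
have e1 := mul_bin_diag (2 * m).+2 m.
have e2 := mul_bin_diag (2 * m).+1 m.
have e3 := mul_bin_left (2 * m).+1 m.
simpl in e1, e2.
have -> : (2 * m.+1 = (2 * m).+2)%N by lia.
set b := 'C(2 * m, m) in IH e2 *.
set b' := 'C((2 * m).+2, m.+1) in e1 *.
have e4 : (m.+1 * b' = 2 * (2 * m + 1) * b)%N.
  have h3 : ((2 * m).+1 - m = m.+1)%N by lia.
  rewrite h3 in e3.
  lia.
have key : ((m.+1 ^ 2) * (16 ^ m.+1) <= (m.+1 ^ 2) * ((4 * m.+1 + 1) * b' ^ 2))%N.
  have -> : (m.+1 ^ 2 * ((4 * m.+1 + 1) * b' ^ 2) = (4 * m + 5) * (m.+1 * b') ^ 2)%N.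
    by rewrite expnMn; lia.
  rewrite e4.
  have P : (16 * (m.+1 ^ 2) * (4 * m + 1) <= (4 * m + 5) * (4 * (2 * m + 1) ^ 2))%N.
    nia.
  have Q1 := leq_mul P (leqnn (b ^ 2)).
  have Q2 := leq_mul (leqnn (16 * m.+1 ^ 2)) IH.
  have E16 : (16 ^ m.+1 = 16 * 16 ^ m)%N by rewrite expnS.
  rewrite E16; rewrite !expnMn in Q1 Q2 *; lia.
by rewrite leq_pmul2l ?expn_gt0 in key.
Qed.

Lemma final p :
  ((2 * p).+1 * 4 ^ (2 * p).+1 <= 16 * (p.+1 * 'C((2 * p).+1, p.+1)) ^ 2)%N.
Proof.
have e := mul_bin_diag (2 * p).+1 p; simpl in e.
rewrite -e expnS expnM.
have := central p; set b := 'C(2 * p, p) => h.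
have -> : (4 ^ 2 = 16)%N by [].
rewrite !expnMn in h *; nia.
Qed.
Definition xb k (x : cube k.+1) (i : nat) : bool := x (inord i).

Definition psi_f k (x : cube k.+1) : cube k.+1 :=
  [ffun i : 'I_k.+1 => if (i < k)%N then xb x i (+) xb x i.+1
                      else Majority x (+) xb x 0 (+) xb x k].

Lemma sum_compl n (x : cube n) :
  (\sum_(i < n) (~~ x i : nat) + \sum_(i < n) (x i : nat) = n)%N.
Proof.
rewrite -big_split /=.
rewrite (eq_bigr (fun _ => 1%N)); last by move=> i _; case: (x i).
by rewrite sum1_card card_ord.
Qed.

Lemma maj_compl n (x : cube n) : odd n ->
  Majority [ffun i => ~~ x i] = ~~ Majority x.
Proof.
move=> on; rewrite /Majority.
have E : (\sum_(i < n) ([ffun i => ~~ x i] i : nat) = \sum_(i < n) (~~ x i : nat))%N.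
  by apply: eq_bigr => i _; rewrite ffunE.
rewrite E; have := sum_compl x; have := odd_double_half n; rewrite on.
set a := (\sum_(i < n) (~~ x i : nat))%N; set b := (\sum_(i < n) (x i : nat))%N.
move=> h1 h2; apply/idP/idP.
- by move=> h; apply/negP => h'; lia.
- by move/negP => h; lia.
Qed.

Lemma xor_tele (f : nat -> bool) j :
  odd (\sum_(i < j) (f i (+) f i.+1 : nat)) = f 0%N (+) f j.
Proof.
elim: j => [|j IH]; first by rewrite big_ord0 /= addbb.
rewrite big_ord_recr /= oddD IH oddb.
by case: (f 0%N); case: (f j); case: (f j.+1).
Qed.

Lemma psi_map k (x : cube k.+1) : Majority x = XOR (psi_f x).
Proof.
rewrite /XOR big_ord_recr /= oddD !ffunE /= ltnn oddb.
rewrite (eq_bigr (fun i : 'I_k => (xb x i (+) xb x i.+1 : nat))); last first.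
  by move=> i _; rewrite ffunE /= ltn_ord.
rewrite xor_tele.
by case: (Majority x); case: (xb x 0); case: (xb x k).
Qed.

Lemma psi_inj k : odd k.+1 -> injective (@psi_f k).
Proof.
move=> ok x y /ffunP E.
have Ei : forall i, (i < k)%N -> xb x i (+) xb x i.+1 = xb y i (+) xb y i.+1.
  move=> i lt; have := E (Ordinal (leqW lt)); by rewrite !ffunE /= lt.
have C : forall i, (i <= k)%N -> xb x i (+) xb y i = xb x 0 (+) xb y 0.
  elim=> [//|i IH] lt.
  rewrite -(IH (ltnW lt)); move: (Ei i lt).
  by case: (xb x i); case: (xb y i); case: (xb x i.+1); case: (xb y i.+1).
case c: (xb x 0 (+) xb y 0).
  have Hy : y = [ffun i => ~~ x i].
    apply/ffunP=> i; rewrite ffunE; have := C i; rewrite -ltnS ltn_ord c /xb inord_val.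
    by move=> /(_ isT); case: (x i); case: (y i).
  have := E ord_max; rewrite !ffunE /= ltnn.
  have -> : xb y 0 = ~~ xb x 0 by rewrite Hy /xb ffunE.
  have -> : xb y k = ~~ xb x k by rewrite Hy /xb ffunE.
  rewrite Hy maj_compl //.
  by case: (Majority x); case: (xb x 0); case: (xb x k).
apply/ffunP=> i; have := C i; rewrite -ltnS ltn_ord c /xb inord_val.
by move=> /(_ isT); case: (x i); case: (y i).
Qed.

Lemma psi_lip k (x y : cube k.+1) :
  (dist (psi_f x) (psi_f y) <= 3 * dist x y)%N.
Proof.
case: (eqVneq x y) => [->|ne].
  by rewrite distE big1 // => i _; rewrite eqxx.
have pos : (0 < dist x y)%N.
  move: ne; apply: contraNT; rewrite -leqNgt leqn0 /dist cards_eq0 => /eqP E0.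
  apply/eqP/ffunP=> i; apply/eqP; apply: negbNE; apply/negP => h.
  have : i \in [set i | x i != y i] by rewrite inE.
  by rewrite E0 inE.
set dn := fun i : nat => (xb x i != xb y i : nat).
have D : dist x y = (\sum_(0 <= i < k.+1) dn i)%N.
  rewrite distE big_mkord; apply: eq_bigr => i _; by rewrite /dn /xb inord_val.
rewrite distE big_ord_recr /=.
have L : ((psi_f x ord_max != psi_f y ord_max : nat) <= 1)%N.
  by case: (_ != _).
have S : (\sum_(i < k) (psi_f x (widen_ord (leqnSn k) i)
          != psi_f y (widen_ord (leqnSn k) i) : nat)
          <= \sum_(0 <= i < k) dn i + \sum_(0 <= i < k) dn i.+1)%N.
  rewrite -big_split /= big_mkord; apply: leq_sum => i _.
  rewrite !ffunE /= ltn_ord /dn.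
  by case: (xb x i); case: (xb y i); case: (xb x i.+1); case: (xb y i.+1).
have S1 : (\sum_(0 <= i < k) dn i <= dist x y)%N.
  by rewrite D big_nat_recr //= leq_addr.
have S2 : (\sum_(0 <= i < k) dn i.+1 <= dist x y)%N.
  by rewrite D big_nat_recl // leq_addl.
apply: (leq_trans (leq_add S L)); lia.
Qed.
Local Open Scope ring_scope.
Lemma key_alg (n N S : nat) : (0 < N)%N -> (n * N ^ 2 <= (4 * S) ^ 2)%N ->
  4^-1 * sqrtC (n%:R) <= (S%:R / N%:R : algC).
Proof.
move=> N0 h.
have Np : (0 : algC) < N%:R by rewrite ltr0n.
rewrite ler_pdivlMr // -mulrA mulrC ler_pdivrMr ?ltr0n //.
rewrite -[X in _ * X <= _](@sqrCK _ N%:R) ?ler0n //.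
rewrite -sqrtCM ?nnegrE ?ler0n ?exprn_ge0 //.
rewrite -[X in _ <= X](@sqrCK _ (S%:R * 4)) ?mulr_ge0 ?ler0n //.
rewrite ler_sqrtC ?nnegrE ?mulr_ge0 ?ler0n ?exprn_ge0 //.
have -> : (S%:R * 4 : algC) = (S * 4)%:R by rewrite natrM.
rewrite -!natrX -!natrM ler_nat.
by rewrite (mulnC S).
Qed.

Theorem theorem3 :
  (exists c : algC, 0 < c /\
     forall n : nat, odd n ->
       forall phi : {perm cube n},
         mapping_from (@XOR n) (@Majority n) phi ->
         c * sqrtC (n%:R) <= avgStretch phi)
  /\
  (exists C : algC, forall n : nat, odd n ->
     exists psi : {perm cube n},
       mapping_from (@Majority n) (@XOR n) psi /\ Lipschitz C psi).
Proof.
split.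
- exists 4^-1; split; first by rewrite invr_gt0 ltr0n.
  move=> n on phi H.
  have [p Hp] : exists p, n = (2 * p).+1.
    by exists n./2; have := odd_double_half n; rewrite on; lia.
  rewrite /avgStretch.
  under eq_bigr => x _ do rewrite -natr_sum.
  rewrite -natr_sum -natrM.
  apply: key_alg; first by rewrite muln_gt0 expn_gt0 Hp.
  have h1 := sumD H; rewrite sumG in h1.
  have h2 := @bound n p.+1 (ltac:(rewrite Hp; lia)).
  have h3 := final p; rewrite -Hp in h3.
  set S := (\sum_(x : cube n) _)%N in h1 *.
  set T := (p.+1 * 'C(n, p.+1))%N in h2 h3.
  set X := (2 ^ n)%N.
  have X2 : (4 ^ n = X * X)%N by rewrite /X -expnMn.
  rewrite X2 in h3.
  have h5 := leq_mul (leqnn n) h2.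
  have hT : (n * T <= S)%N by lia.
  have hT2 := leq_mul hT hT.
  have h4 := leq_mul (leqnn (n * n)) h3.
  rewrite !expnMn in h3 h4 *; nia.
- exists 3%:R => n on.
  have [p Hp] : exists p, n = (2 * p).+1.
    by exists n./2; have := odd_double_half n; rewrite on; lia.
  subst n.
  exists (perm (psi_inj on)); split.
    by move=> z; rewrite permE; apply: psi_map.
  by move=> x y; rewrite !permE -natrM ler_nat; apply: psi_lip.
Qed.
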